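(* Let $c$ be a real number with $2<c<4$. There exists $k(c)$ such that for every integer $k>k(c)$ for which $n=ck$ is an integer, there is an intersecting family $\mathcal F\subset\binom{[n]}{k}$ with $$|\mathcal D(\mathcal F)|>\sum_{0\le \ell<k}\binom{n-1}{\ell}.$$
   Context: $[n]=\{1,\dots,n\}$; $\binom{[n]}{k}$ is the family of all $k$-element subsets of $[n]$. A family $\mathcal F$ is intersecting if $F\cap F'\neq\varnothing$ for all $F,F'\in\mathcal F$. $\mathcal D(\mathcal F):=\{F\setminus F' : F,F'\in\mathcal F\}$. *)

(* Defs.v *)
From mathcomp Require Import all_boot.
From Stdlib Require Import Reals.
Set Implicit Arguments. Unset Strict Implicit. Unset Printing Implicit Defensive.

Definition uniform (n k : nat) (F : {set {set 'I_n}}) : bool :=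
  [forall A in F, #|A| == k].

Definition intersecting (n : nat) (F : {set {set 'I_n}}) : bool :=
  [forall A in F, forall B in F, A :&: B != set0].

Definition diffs (n : nat) (F : {set {set 'I_n}}) : {set {set 'I_n}} :=
  [set A :\: B | A in F, B in F].

(* Main.v *)
Require Import Defs.
From mathcomp Require Import all_boot zify.
From Stdlib Require Import Reals Lra ZArith.
Notation "m ^ n" := (expn m n) : nat_scope.

Lemma pow_bern a s : a ^ s * (a + s) <= (a.+1) ^ s * a.
Proof.
elim: s => [|s IH]; first by rewrite !expn0 addn0 mul1n.
rewrite !expnS.
have H1 : a * a ^ s * (a + s.+1) <= a.+1 * (a ^ s * (a + s)).
  by nia.
apply: (leq_trans H1).
by rewrite -mulnA leq_mul2l IH orbT.
Qed.

Lemma exists_t w : 0 < w -> exists t, (w.+1) ^ t.+1 < (2 * w + 1) ^ t.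
Proof.
move=> w0; exists ((w.+1)^2).
set a := w.+1. set s := a ^ 2.
have H := pow_bern a s.
have H2 : (a.+1) ^ s <= (2 * w + 1) ^ s.
  rewrite leq_exp2r; first lia.
  by rewrite /s /a expn_gt0.
apply: leq_trans H2.
have Ha : 0 < a by [].
have Hs : a ^ s.+1 * a < a.+1 ^ s * a.
  apply: leq_trans H. rewrite expnS /s.
  have : 0 < a ^ (a^2) by rewrite expn_gt0.
  nia.
by rewrite ltn_pmul2r in Hs.
Qed.

Fixpoint gsum (u v s : nat) : nat :=
  if s is s'.+1 then v * gsum u v s' + u ^ s'.+1 else 0.

Lemma gsum_id w s : gsum w.+1 (2 * w + 1) s * w + w.+1 ^ s.+1 = w.+1 * (2 * w + 1) ^ s.
Proof.
elim: s => [|s IH]; first by rewrite /= expn1 expn0 muln1.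
rewrite /= [w.+1 ^ s.+2]expnS [(2*w+1)^s.+1]expnS.
move: IH; move: (gsum _ _ s) (w.+1 ^ s.+1) ((2*w+1)^s) => X P V IH.
nia.
Qed.

Lemma gsum_big w t : 0 < w -> w.+1 ^ t.+1 < (2 * w + 1) ^ t -> (2 * w + 1) ^ t < gsum w.+1 (2 * w + 1) t.
Proof.
move=> w0 H; have E := gsum_id w t.
set X := gsum _ _ t in E *. set P := w.+1 ^ t.+1 in E H *. set V := (2*w+1)^t in E H *.
nia.
Qed.

Lemma ratio_step N j u v : j < N -> u * (N - j) <= v * j.+1 ->
  'C(N, j.+1) * u <= 'C(N, j) * v.
Proof.
move=> jN H.
have E := mul_bin_left N j.
have p : 0 < N - j by rewrite subn_gt0.
rewrite -(leq_pmul2r p).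
move: E H; move: ('C(N, j.+1)) ('C(N, j)) (N - j) => C1 C0 d E H.
have : C1 * (u * d) <= C1 * (v * j.+1) by rewrite leq_mul2l H orbT.
nia.
Qed.

Lemma inv_lemma N m u v s : s <= m -> m <= N ->
  (forall j, m - s <= j -> j < m -> u * (N - j) <= v * j.+1) ->
  'C(N, m) * u ^ s <= 'C(N, m - s) * v ^ s /\
  'C(N, m) * gsum u v s <= v ^ s * \sum_(m - s <= j < m) 'C(N, j).
Proof.
elim: s => [|s IH] sm mN Hj.
  by rewrite !expn0 !muln1 subn0 /= muln0.
have [IH1 IH2] := IH (ltnW sm) mN (fun j h1 h2 => Hj j (leq_trans (leq_sub2l m (leqnSn s)) h1) h2).
set j := m - s.+1.
have Ej : m - s = j.+1 by rewrite /j; lia.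
have jm : j < m by rewrite /j; lia.
have jN : j < N by lia.
have R := @ratio_step N j u v jN (Hj j (leqnn _) jm).
rewrite Ej in IH1 IH2.
have A := leq_mul (leqnn u) IH1.
have B := leq_mul R (leqnn (v ^ s)).
rewrite big_ltn /=; last exact: jm. rewrite !expnS.
move: A B IH2; move: ('C(N, m)) ('C(N, j)) ('C(N, j.+1)) (u ^ s) (v ^ s) (gsum u v s) (\sum_(j.+1 <= i < m) 'C(N, i)) => Cm Cj Cj1 us vs g S A B I2.
split; first nia.
have I3 := leq_mul (leqnn v) I2.
nia.
Qed.

Lemma key N m w t : 0 < w -> t <= m -> m <= N ->
  w.+1 ^ t.+1 < (2 * w + 1) ^ t ->
  w.+1 * (N - m + t) <= (2 * w + 1) * (m - t).+1 ->
  'C(N, m) < \sum_(0 <= j < m) 'C(N, j).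
Proof.
move=> w0 tm mN Ht Hr.
have t0 : 0 < t by case: t Ht tm Hr => // ; rewrite expn0 expn1 ltnS ltn0.
have Hj : forall j, m - t <= j -> j < m -> w.+1 * (N - j) <= (2 * w + 1) * j.+1.
  move=> j h1 h2.
  have a1 : N - j <= N - m + t by lia.
  have a2 : (m - t).+1 <= j.+1 by lia.
  apply: leq_trans (leq_mul (leqnn _) a1) _.
  apply: leq_trans Hr _.
  exact: leq_mul (leqnn _) a2.
have [_ I] := @inv_lemma N m w.+1 (2 * w + 1) t tm mN Hj.
have G := @gsum_big w t w0 Ht.
have vp : 0 < (2 * w + 1) ^ t by rewrite expn_gt0; lia.
case: (posnP 'C(N, m)) => [-> | Cp].
  have m0 : 0 < m by lia.
  by rewrite big_ltn //= bin0.
rewrite (@big_cat_nat _ _ _ (m - t)) //=; last exact: leq_subr.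
move: I G vp Cp; move: ('C(N, m)) (gsum _ _ t) ((2 * w + 1) ^ t) (\sum_(m - t <= i < m) 'C(N, i)) => C g V S I G vp Cp.
have : C * V < C * g by rewrite ltn_pmul2l.
move=> H.
have : V * C < V * S by rewrite mulnC; exact: leq_trans H I.
rewrite ltn_pmul2l // => H2. lia.
Qed.

Lemma card_lt (T : finType) (S : {set T}) k :
  #|[set A : {set T} | A \subset S & #|A| < k]| = \sum_(0 <= l < k) 'C(#|S|, l).
Proof.
elim: k => [|k IH].
  rewrite big_geq //; apply/eqP; rewrite cards_eq0; apply/eqP/setP => A.
  by rewrite !inE ltn0 andbF.
rewrite big_nat_recr //= -IH -cards_draws.
have -> : [set A : {set T} | A \subset S & #|A| < k.+1] =
   [set A : {set T} | A \subset S & #|A| < k] :|: [set A : {set T} | A \subset S & #|A| == k].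
  apply/setP => A; rewrite !inE ltnS leq_eqVlt; case: (A \subset S) => //=; by rewrite orbC.
rewrite cardsU.
have -> : [set A : {set T} | A \subset S & #|A| < k] :&: [set A : {set T} | A \subset S & #|A| == k] = set0.
  apply/setP => A; rewrite !inE; case: (A \subset S) => //=.
  by case: (ltngtP #|A| k).
by rewrite cards0 subn0.
Qed.

Lemma exists_sub (T : finType) (S : {set T}) l : l <= #|S| ->
  exists B : {set T}, B \subset S /\ #|B| = l.
Proof.
move=> h.
have : 0 < #|[set A : {set T} | A \subset S & #|A| == l]| by rewrite cards_draws bin_gt0.
case/card_gt0P => B; rewrite inE => /andP[s /eqP c]; by exists B.
Qed.

Lemma card_disjU (T : finType) (A B : {set T}) : A :&: B = set0 -> #|A :|: B| = #|A| + #|B|.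
Proof. by move=> h; rewrite cardsU h cards0 subn0. Qed.

Ltac mlia := repeat match goal with H : _ |- _ => clear H end; lia.

Section Fam.
Variables (n k : nat) (x0 : 'I_n) (G : {set 'I_n}).
Hypothesis x0G : x0 \notin G.
Hypothesis cG : #|G| = k.

Definition fam : {set {set 'I_n}} :=
  [set A : {set 'I_n} | (#|A| == k) && (((x0 \in A) && (A :&: G != set0)) || (A == G))].

Lemma uniform_fam : uniform k fam.
Proof. rewrite /uniform; by apply/forall_inP => A; rewrite inE => /andP[/eqP -> _]. Qed.

Lemma inter_fam : 0 < k -> intersecting fam.
Proof.
move=> k0.
have G0 : G != set0 by rewrite -card_gt0 cG.
rewrite /intersecting; apply/forall_inP => A; rewrite inE => /andP[_ HA].
apply/forall_inP => B; rewrite inE => /andP[_ HB].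
case/orP: HA => [/andP[xA AG] | /eqP ->]; case/orP: HB => [/andP[xB BG] | /eqP ->] //.
- apply/set0Pn; exists x0; by rewrite inE xA xB.
- by rewrite setIC.
- by rewrite setIid.
Qed.

Lemma mem_fam (F1 : {set 'I_n}) : #|F1| = k -> x0 \in F1 -> (exists2 g, g \in F1 & g \in G) -> F1 \in fam.
Proof.
move=> c x [g g1 g2]; rewrite inE c eqxx x /=; apply/orP; left.
by apply/set0Pn; exists g; rewrite inE g1 g2.
Qed.

Lemma G_fam : G \in fam.
Proof. by rewrite inE cG eqxx eqxx orbT. Qed.

Lemma diffs_in (A F1 F2 : {set 'I_n}) : F1 \in fam -> F2 \in fam -> A = F1 :\: F2 -> A \in diffs fam.
Proof. by move=> h1 h2 ->; rewrite /diffs; apply: imset2_f. Qed.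

Definition X := ~: (x0 |: G).

Lemma T3_in (B : {set 'I_n}) : B \subset X -> #|B| < k.-1 -> x0 |: B \in diffs fam.
Proof.
move=> BX Bk.
have x0B : x0 \notin B by apply/negP => /(subsetP BX); rewrite !inE eqxx.
have BG : B :&: G = set0.
  apply/setP => x; rewrite !inE; apply/negP => /andP[/(subsetP BX)]; rewrite !inE => /norP[_ /negP h] /h //.
have [E [EG cE]] := @exists_sub _ G (k - (#|B|).+1) ltac:(rewrite cG; lia).
have AE : (x0 |: B) :&: E = set0.
  apply/setP => x; rewrite !inE; apply/negP => /andP[/orP[/eqP -> | xB] /(subsetP EG) xG].
    by move: x0G; rewrite xG.
  by have := BG; move/setP => /(_ x); rewrite !inE xB xG.
have h1 : (x0 |: B) :|: E \in fam.
  apply: mem_fam.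
  - rewrite card_disjU // cardsU1 x0B cE /=. move: Bk; move: #|B| => b; lia.
  - by rewrite !inE eqxx.
  have : 0 < #|E| by rewrite cE; lia.
  case/card_gt0P => g gE; exists g; first by rewrite inE gE orbT.
  exact: (subsetP EG).
apply: (@diffs_in _ _ _ h1 G_fam).
apply/setP => x; rewrite !inE.
case xG: (x \in G); rewrite /= ?andbF ?andbT //.
+ case: eqP => [ex|] /=; first by move: x0G; rewrite -ex xG.
  by have := BG; move/setP => /(_ x); rewrite !inE xG andbT => ->.
+ case xE: (x \in E); last by rewrite orbF.
  by rewrite (subsetP EG x xE) in xG.
Qed.

Lemma UL_in (A : {set 'I_n}) : 2 <= k -> 2 * k + 1 <= n -> x0 \notin A -> #|A| < k ->
  ~~ ((A \subset X) && (#|A| == k.-1)) -> A \in diffs fam.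
Proof.
move=> k2 nk x0A Ak notL.
have [g gG gA] : exists2 g, g \in G & g \notin A.
  apply/subsetPn; apply/negP => sub; have := subset_leq_card sub; rewrite cG; lia.
have gx0 : g != x0 by apply/eqP => e; move: x0G; rewrite -e gG.
set W := ~: A :\ x0 :\ g.
have cW : k.-2 <= #|W|.
  have e1 := cardsC A; rewrite card_ord in e1.
  have e2 := cardsD1 x0 (~: A).
  have e3 := cardsD1 g (~: A :\ x0).
  rewrite /W; move: e1 e2 e3 Ak nk.
  move: (#|A|) (#|~: A|) (#|~: A :\ x0|) (#|~: A :\ x0 :\ g|) (x0 \in ~: A) (g \in ~: A :\ x0) => a b c d u v.
  case: u; case: v => /=; lia.
have [D [DW cD]] := @exists_sub _ _ _ cW.
have Dfact : forall x, x \in D -> [/\ x != g, x != x0 & x \notin A].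
  move=> x /(subsetP DW); rewrite !inE => /andP[-> /andP[-> ->]] //.
have gD : g \notin D by apply/negP => /Dfact [/eqP].
have x0D : x0 \notin D by apply/negP => /Dfact [_ /eqP].
set F2 := x0 |: (g |: D).
have h2 : F2 \in fam.
  apply: mem_fam.
  - rewrite /F2 cardsU1 cardsU1 gD !inE (negbTE x0D) eq_sym (negbTE gx0) /= cD; move: k2; mlia.
  - by rewrite !inE eqxx.
  by exists g; rewrite // !inE eqxx orbT.
have [E [Esub cE [y yAE yG]]] : exists E : {set 'I_n},
    [/\ E \subset g |: D, #|E| = k.-1 - #|A| & exists2 y, y \in A :|: E & y \in G].
  have [AG0 | AGn] := eqVneq (A :&: G) set0.
    have AX : A \subset X.
      apply/subsetP => x xA; rewrite !inE; apply/negP => /orP[/eqP ex | xG].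
        by move: x0A; rewrite -ex xA.
      by have := AG0; move/setP => /(_ x); rewrite !inE xA xG.
    have Ak1 : #|A| < k.-1 by move: notL; rewrite AX /= => /eqP ne; move: Ak ne; move: #|A| => a; mlia.
    have [D' [D'D cD']] := @exists_sub _ D (k.-2 - #|A|) ltac:(rewrite cD; exact: leq_subr).
    exists (g |: D'); split.
    - by apply: setUS.
    - rewrite cardsU1 cD'; have -> : g \notin D' by apply/negP => /(subsetP D'D); rewrite (negbTE gD).
      rewrite /=; move: Ak1 k2; move: #|A| => a; mlia.
    - by exists g; rewrite // !inE eqxx orbT.
  have cgD : #|g |: D| = k.-1 by rewrite cardsU1 gD cD; move: k2; mlia.
  have [E [ES cE]] := @exists_sub _ (g |: D) (k.-1 - #|A|) ltac:(rewrite cgD; exact: leq_subr).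
  exists E; split => //.
  case/set0Pn: AGn => y; rewrite inE => /andP[yA yG]; exists y => //; by rewrite inE yA.
have Efact : forall x, x \in E -> x \notin A /\ x != x0.
  move=> x /(subsetP Esub); rewrite !inE => /orP[/eqP -> | /Dfact [_ ? ?]]; by split.
have h1 : x0 |: (A :|: E) \in fam.
  apply: mem_fam.
  - rewrite cardsU1 card_disjU.
      have -> : x0 \notin A :|: E by rewrite inE negb_or x0A /=; apply/negP => /Efact [_ /eqP].
      rewrite cE /=; move: Ak; move: #|A| => a; mlia.
    apply/setP => x; rewrite !inE; apply/negP => /andP[xA /Efact [xA' _]].
    by rewrite xA in xA'.
  - by rewrite !inE eqxx.
  by exists y; rewrite // inE yAE orbT.
apply: (@diffs_in _ _ _ h1 h2).
apply/setP => x; rewrite /F2 !inE.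
case xA: (x \in A) => /=.
  have xx0 : (x == x0) = false by apply/negP => /eqP ex; move: x0A; rewrite -ex xA.
  have xg : (x == g) = false by apply/negP => /eqP ex; move: gA; rewrite -ex xA.
  have xD : (x \in D) = false by apply/negP => /Dfact [_ _]; rewrite xA.
  by rewrite xx0 xg xD.
case xE: (x \in E) => /=.
  have := subsetP Esub x xE; rewrite !inE => /orP[-> | ->]; by rewrite ?orbT.
by case: (x == x0); rewrite /= ?andbF.
Qed.
End Fam.

Lemma construction n k : 2 <= k -> 2 * k + 1 <= n ->
  'C(n - k - 1, k.-1) < \sum_(0 <= j < k.-1) 'C(n - k - 1, j) ->
  exists F : {set {set 'I_n}},
      [/\ uniform k F, intersecting F &
          \sum_(0 <= l < k) 'C(n.-1, l) < #|diffs F| ].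
Proof.
move=> k2 nk Hb.
have n0 : 0 < n by lia.
pose x0 := Ordinal n0.
have [G [Gs cG]] := @exists_sub _ [set~ x0] k ltac:(rewrite cardsC1 card_ord; lia).
have x0G : x0 \notin G by apply/negP => /(subsetP Gs); rewrite !inE eqxx.
exists (@fam n k x0 G); split.
- exact: uniform_fam.
- apply: inter_fam => //; lia.
pose Xs := @X n x0 G.
pose U := [set A : {set 'I_n} | A \subset [set~ x0] & #|A| < k].
pose L := [set A : {set 'I_n} | A \subset Xs & #|A| == k.-1].
pose V := [set A : {set 'I_n} | A \subset Xs & #|A| < k.-1].
have XsC : Xs \subset [set~ x0].
  by apply/subsetP => x; rewrite !inE negb_or => /andP[].
have LU : L \subset U.
  apply/subsetP => A; rewrite !inE => /andP[AX /eqP ->]; rewrite (subset_trans AX XsC) /=; lia.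
have sub : (U :\: L) :|: [set x0 |: B | B in V] \subset diffs (@fam n k x0 G).
  apply/subsetP => A; rewrite inE => /orP[ | ].
    rewrite !inE => /andP[notL /andP[AU Ak]].
    apply: UL_in => //.
    by apply/negP => /(subsetP AU); rewrite !inE eqxx.
  case/imsetP => B; rewrite inE => /andP[BX Bk] ->.
  exact: T3_in.
have cX : #|Xs| = n - k - 1.
  have := cardsC (x0 |: G); rewrite cardsU1 x0G cG card_ord /= => e.
  rewrite /Xs /X; lia.
have cU : #|U| = \sum_(0 <= l < k) 'C(n.-1, l) by rewrite card_lt cardsC1 card_ord.
have cL : #|L| = 'C(n - k - 1, k.-1) by rewrite cards_draws cX.
have cV : #|V| = \sum_(0 <= j < k.-1) 'C(n - k - 1, j) by rewrite card_lt cX.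
have cI : #|[set x0 |: B | B in V]| = #|V|.
  apply: card_in_imset => B1 B2; rewrite !inE => /andP[B1X _] /andP[B2X _] e.
  have h1 : x0 \notin B1 by apply/negP => /(subsetP (subset_trans B1X XsC)); rewrite !inE eqxx.
  have h2 : x0 \notin B2 by apply/negP => /(subsetP (subset_trans B2X XsC)); rewrite !inE eqxx.
  by rewrite -(setU1K h1) -(setU1K h2) e.
have cT : #|(U :\: L) :|: [set x0 |: B | B in V]| = #|U| - #|L| + #|V|.
  rewrite card_disjU ?cardsDS ?cI //.
  apply/setP => A; rewrite !inE; apply/negP => /andP[/andP[_ /andP[AU _]] /imsetP [B _ eA]].
  by move: (subsetP AU x0); rewrite eA !inE eqxx /= => /(_ isT).
have := subset_leq_card sub; rewrite cT.
have := subset_leq_card LU.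
rewrite cU cL cV in Hb *.
move: Hb; move: (#|diffs _|) (\sum_(0 <= l < k) 'C(n.-1, l)) ('C(n - k - 1, k.-1)) (\sum_(0 <= j < k.-1) 'C(n - k - 1, j)) => d a b c.
lia.
Qed.

Lemma nat_above (r : R) : exists N : nat, (r < INR N)%R.
Proof.
destruct (archimed r) as [H _].
destruct (Z.le_gt_cases 0 (up r)) as [h|h].
- exists (Z.to_nat (up r)); rewrite INR_IZR_INZ Z2Nat.id; [lra | exact h].
- exists 0%nat; simpl. apply IZR_lt in h. lra.
Qed.

Lemma INR_muln a b : INR (a * b) = (INR a * INR b)%R.
Proof. by rewrite -multE mult_INR. Qed.
Lemma INR_addn a b : INR (a + b) = (INR a + INR b)%R.
Proof. by rewrite -plusE plus_INR. Qed.

Lemma real_part (c : R) : (2 < c < 4)%R -> exists w : nat, 0 < w /\ ((c - 2) * (INR w + 1) < 2 * INR w + 1)%R.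
Proof.
move=> [h1 h2].
have [N HN] := nat_above (/ (4 - c)).
exists N.+1; split => //.
have -> : INR N.+1 = (INR N + 1)%R by apply: S_INR.
have p : (0 < 4 - c)%R by lra.
have pos : (0 <= INR N)%R by apply: pos_INR.
have : (1 < (INR N + 1) * (4 - c))%R.
  have e : (/ (4 - c) * (4 - c) = 1)%R by field; lra.
  nra.
nra.
Qed.

Lemma k_bound (c : R) (w t : nat) : (2 < c < 4)%R -> ((c - 2) * (INR w + 1) < 2 * INR w + 1)%R ->
  exists k0 : nat, forall k n : nat, k0 < k -> INR n = (c * INR k)%R ->
    [/\ 2 * k + 1 <= n, t.+2 <= k &
     w.+1 * (n + t) + (2 * w + 1) * t <= (2 * w + 1) * k + w.+1 * (2 * k)].
Proof.
move=> [h1 h2] hw.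
set d := (2 * INR w + 1 - (c - 2) * (INR w + 1))%R.
have dp : (0 < d)%R by rewrite /d; lra.
have [K HK] := nat_above ((3 * INR w + 2) * INR t / d).
exists (K + t.+2) => k n hk hn.
have kK : (INR K <= INR k)%R by apply: le_INR; apply/leP; lia.
have k0 : (0 <= INR k)%R by apply: pos_INR.
have t0 : (0 <= INR t)%R by apply: pos_INR.
have w0 : (0 <= INR w)%R by apply: pos_INR.
split.
- have : (INR (2 * k) < INR n)%R.
    rewrite INR_muln hn /=. have : (0 < INR k)%R by apply: lt_0_INR; apply/ltP; lia. nra.
  move/INR_lt/ltP; lia.
- lia.
- apply/leP; apply: INR_le.
  rewrite !(INR_muln, INR_addn) hn !S_INR. have I2 : INR 2 = 2%R by simpl; lra. rewrite INR_0.
  have : ((3 * INR w + 2) * INR t < d * INR k)%R.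
    have e : ((3 * INR w + 2) * INR t / d * d = (3 * INR w + 2) * INR t)%R by field; lra.
    nra.
  rewrite /d. nra.
Qed.

Theorem mainTheorem2 (c : R) (hc : (2 < c < 4)%R) :
  exists k0 : nat, forall k n : nat, k0 < k -> INR n = (c * INR k)%R ->
    exists F : {set {set 'I_n}},
      [/\ uniform k F, intersecting F &
          \sum_(0 <= l < k) 'C(n.-1, l) < #|diffs F| ].
Proof.
have [w [w0 hw]] := @real_part c hc.
have [t Ht] := @exists_t w w0.
have [k0 Hk] := @k_bound c w t hc hw.
exists k0 => k n hk hn.
have [nk tk ineq] := Hk k n hk hn.
apply: (@construction n k); [lia | exact: nk | ].
apply: (@key (n - k - 1) k.-1 w t w0) => //; try lia.
Qed.
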